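(* Let $m \ge 2$ and $n \ge 2m-1$ be integers. Then for every real $r$ with $|r|<1$, $$\int_{-1}^1 \frac{U_n(s)(1-s^2)^{m-\frac{1}{2}}}{(s-r)^2}\,ds = \pi(-1)^{m}\left(\frac{1}{2}\right)^{2m-2}\sum_{j=0}^{2m-2}(-1)^j\binom{2m-2}{j}(n+3-2m+2j)\,U_{n+2-2m+2j}(r),$$ where the integral is a Hadamard finite-part integral.
   Context: $U_k(s)=\frac{\sin((k+1)\cos^{-1}s)}{\sin(\cos^{-1}s)}$ is the Tchebyshev polynomial of the second kind. For a positive integer $\alpha\ge 2$ and $|r|<1$, the integral $\int_{-1}^1 \frac{D(s)}{(s-r)^\alpha}ds$ is understood in the Hadamard finite-part sense; in particular it satisfies $\int_{-1}^1 \frac{D(s)}{(s-r)^{\alpha}}ds=\frac{1}{\alpha-1}\frac{d}{dr}\int_{-1}^1\frac{D(s)}{(s-r)^{\alpha-1}}ds$, where for $\alpha-1=1$ the right-hand integral is a Cauchy principal value. $\binom{a}{j}=\frac{a!}{j!(a-j)!}$. *)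

(* Defs.v *)
From Stdlib Require Import Reals Lra.
From Coquelicot Require Import Coquelicot.
Open Scope R_scope.

Definition chebU (k : nat) (s : R) : R :=
  sin (INR (k + 1) * acos s) / sin (acos s).

Definition is_PV (D : R -> R) (r l : R) : Prop :=
  filterlim
    (fun eps => RInt (fun s => D s / (s - r)) (-1) (r - eps)
              + RInt (fun s => D s / (s - r)) (r + eps) 1)
    (at_right 0) (locally l).

(* Hadamard finite part of order 2:
   f.p. int_{-1}^1 D(s)/(s - r)^2 ds = d/dr PV int_{-1}^1 D(s)/(s - r) ds *)
Definition is_HFP2 (D : R -> R) (r l : R) : Prop :=
  exists P : R -> R,
    (forall x, -1 < x < 1 -> is_PV D x (P x)) /\ is_derive P r l.

(* Main.v *)
Require Import Defs.
From Stdlib Require Import Reals Lra Lia.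
From Coquelicot Require Import Coquelicot.
Open Scope R_scope.

Lemma ball_R (x y e : R) : ball x e y <-> Rabs (y - x) < e.
Proof. reflexivity. Qed.

Lemma acos_cont_1 : continuous acos 1.
Proof.
  apply filterlim_locally. intros eps.
  set (e' := Rmin eps (PI/2)).
  assert (He' : 0 < e' <= PI/2).
  { unfold e'. pose proof (cond_pos eps). pose proof PI_RGT_0.
    split; [apply Rmin_glb_lt; lra | apply Rmin_r]. }
  assert (Hc : cos e' < 1).
  { rewrite <- cos_0. apply cos_decreasing_1; pose proof PI_RGT_0; lra. }
  assert (Hc0 : 0 <= cos e').
  { apply cos_ge_0; pose proof PI_RGT_0; lra. }
  assert (Hd : 0 < 1 - cos e') by lra.
  exists (mkposreal _ Hd). intros y Hy. change (Rabs (y - 1) < 1 - cos e') in Hy. change (Rabs (acos y - acos 1) < eps).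
  rewrite acos_1.
  destruct (Rle_dec 1 y).
  - unfold acos at 1. destruct (Rle_dec y (-1)) as [q|q]; [lra|]. destruct (Rle_dec 1 y) as [q2|q2]; [|lra].
    rewrite Rminus_0_r, Rabs_R0. apply cond_pos.
  - assert (Hy1 : cos e' < y) by (apply Rabs_lt_between in Hy; lra).
    pose proof (acos_bound y).
    assert (acos y < e').
    { destruct (Rlt_le_dec (acos y) e') as [h|h]; auto.
      exfalso. assert (cos (acos y) <= cos e').
      { apply cos_decr_1; pose proof PI_RGT_0; lra. }
      rewrite cos_acos in H0 by lra. lra. }
    rewrite Rminus_0_r, Rabs_pos_eq by lra.
    assert (e' <= eps) by apply Rmin_l. lra.
Qed.

Lemma acos_cont : forall x, continuous acos x.
Proof.
  intros x.
  destruct (Rlt_le_dec x 1) as [h1|h1]; destruct (Rlt_le_dec (-1) x) as [h2|h2].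
  - apply (@ex_derive_continuous R_AbsRing R_NormedModule). exists (-1 / sqrt (1 - x²)).
    apply is_derive_Reals. 
    pose proof (derive_pt_acos x (conj h2 h1)) as H.
    rewrite <- H. destruct (derivable_pt_acos x (conj h2 h1)) as [l Hl]. exact Hl.
  - destruct h2 as [h2|h2].
    + apply continuous_ext_loc with (fun _ => PI).
      * assert (hp : 0 < -1 - x) by lra. exists (mkposreal _ hp). intros y Hy. change (Rabs (y - x) < (-1 - x)) in Hy.
        apply Rabs_lt_between in Hy. unfold acos. destruct (Rle_dec y (-1)); [reflexivity| lra].
      * apply continuous_const.
    + subst x. apply continuous_ext with (fun y => PI - acos (- y)).
      * intros y. rewrite acos_opp. simpl; lra.
      * apply (continuous_minus (fun _ => PI) (fun y => acos (-y))). apply continuous_const.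
        apply continuous_comp. apply (@ex_derive_continuous R_AbsRing R_NormedModule); auto_derive; auto.
        replace (- -1) with 1 by ring. apply acos_cont_1.
  - destruct h1 as [h1|h1].
    + apply continuous_ext_loc with (fun _ => 0).
      * assert (hp : 0 < x - 1) by lra. exists (mkposreal _ hp). intros y Hy. change (Rabs (y - x) < (x - 1)) in Hy.
        apply Rabs_lt_between in Hy. unfold acos. destruct (Rle_dec y (-1)); [lra|].
        destruct (Rle_dec 1 y); [reflexivity|lra].
      * apply continuous_const.
    + subst x. apply acos_cont_1.
  - lra.
Qed.

Lemma ex_RInt_avoid (f : R -> R) (a b p : R) :
  (forall z, z <> p -> continuous f z) ->
  (forall z, Rmin a b <= z <= Rmax a b -> z <> p) -> ex_RInt f a b.
Proof.
  intros Hc Hz. apply (@ex_RInt_continuous R_CompleteNormedModule). intros z Hz'. apply Hc, Hz, Hz'.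
Qed.

Lemma FTC_open (F f : R -> R) (a b p : R) :
  a < b -> (p < a \/ b < p) ->
  (forall z, z <> p -> continuous f z) ->
  (forall t, a < t < b -> is_derive F t (f t)) ->
  continuous F a -> continuous F b ->
  is_RInt f a b (F b - F a).
Proof.
  intros Hab Hp Hc HF HFa HFb.
  assert (Hd : 0 < Rmax (a - p) (p - b)).
  { destruct Hp; [eapply Rlt_le_trans; [|apply Rmax_l]|eapply Rlt_le_trans; [|apply Rmax_r]]; lra. }
  set (d := mkposreal _ Hd).
  assert (Hloc : forall x, a <= x <= b -> forall z, Rabs (z - x) < d -> ex_RInt f a z).
  { intros x Hx z Hzx. apply (ex_RInt_avoid f a z p Hc).
    intros w Hw. simpl in Hzx. apply Rabs_lt_between in Hzx.
    unfold Rmin, Rmax in Hw. destruct (Rle_dec a z).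
    - destruct Hp.
      + lra.
      + assert (p - b <= Rmax (a-p) (p-b)) by apply Rmax_r.
        assert (Rmax (a - p) (p - b) = p - b).
        { unfold Rmax. destruct (Rle_dec (a-p) (p-b)); lra. }
        lra.
    - destruct Hp.
      + assert (Rmax (a - p) (p - b) = a - p).
        { unfold Rmax. destruct (Rle_dec (a-p) (p-b)); lra. }
        lra.
      + lra. }
  assert (HI : ex_RInt f a b) by (apply (Hloc b); [lra| rewrite Rminus_diag, Rabs_R0; apply cond_pos]).
  apply (RInt_correct f a b) in HI as HI'.
  replace (F b - F a) with (RInt f a b); [exact HI'|].
  set (H := fun t => RInt f a t - F t).
  destruct (MVT_gen H a b (fun _ => 0)) as [c [_ Hc0]].
  - rewrite Rmin_left, Rmax_right by lra. intros x Hx.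
    replace 0 with (f x - f x) by ring. unfold H.
    apply (is_derive_minus (fun t => RInt f a t) F).
    + apply is_derive_RInt with (a := a).
      * assert (Hdx : 0 < Rmin (x - a) (b - x)) by (apply Rmin_glb_lt; lra).
        exists (mkposreal _ Hdx). intros z Hz. apply (@RInt_correct R_CompleteNormedModule).
        change (Rabs (z - x) < Rmin (x - a) (b - x)) in Hz.
        apply (ex_RInt_avoid f a z p Hc). intros w Hw.
        apply Rabs_lt_between in Hz.
        assert (Rmin (x - a) (b - x) <= x - a) by apply Rmin_l.
        assert (Rmin (x - a) (b - x) <= b - x) by apply Rmin_r.
        unfold Rmin, Rmax in Hw. destruct (Rle_dec a z); destruct Hp; lra.
      * apply Hc. lra.
    + apply HF. lra.
  - rewrite Rmin_left, Rmax_right by lra. intros x Hx.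
    apply continuity_pt_filterlim. unfold H.
    apply (continuous_minus (fun t => RInt f a t) F).
    + apply (continuous_RInt_1 f a x). exists d. intros z Hz. apply (@RInt_correct R_CompleteNormedModule).
      apply (Hloc x Hx z Hz).
    + destruct (Req_dec x a) as [->|hxa]; [exact HFa|].
      destruct (Req_dec x b) as [->|hxb]; [exact HFb|].
      apply (@ex_derive_continuous R_AbsRing R_NormedModule). exists (f x). apply HF. lra.
  - unfold H in Hc0. rewrite RInt_point in Hc0. change (zero : R) with 0 in Hc0. lra.
Qed.

Definition cont (f : R -> R) := forall s, continuous f s.

Lemma lim_plus {T} {F} {FF : Filter F} (u v : T -> R) a b :
  filterlim u F (locally a) -> filterlim v F (locally b) ->
  filterlim (fun e => u e + v e) F (locally (a + b)).
Proof.
  intros Hu Hv. eapply filterlim_comp_2; [exact Hu|exact Hv|].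
  apply (@filterlim_plus R_AbsRing R_NormedModule).
Qed.

Lemma lim_scal {T} {F} {FF : Filter F} (u : T -> R) c a :
  filterlim u F (locally a) -> filterlim (fun e => c * u e) F (locally (c * a)).
Proof.
  intros Hu. eapply filterlim_comp; [exact Hu|].
  apply (@filterlim_scal_r R_AbsRing R_NormedModule).
Qed.

Lemma at_right_small (d : R) : 0 < d -> at_right 0 (fun e => 0 < e < d).
Proof.
  intros Hd. exists (mkposreal _ Hd). intros y Hy Hy0.
  change (Rabs (y - 0) < d) in Hy. apply Rabs_lt_between in Hy. lra.
Qed.

Lemma cont_at_right (phi : R -> R) : continuous phi 0 ->
  filterlim phi (at_right 0) (locally (phi 0)).
Proof.
  intros H P HP. destruct (H P HP) as [d Hd]. exists d. intros y Hy _. apply Hd, Hy.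
Qed.

Lemma cont_div (f : R -> R) x z : cont f -> z <> x ->
  continuous (fun s => f s / (s - x)) z.
Proof.
  intros Hf Hz. apply (continuous_mult f (fun s => / (s - x))). apply Hf.
  apply continuous_Rinv_comp.
  - apply (@ex_derive_continuous R_AbsRing R_NormedModule); auto_derive; auto.
  - lra.
Qed.

Lemma cont_ex_RInt f a b : cont f -> ex_RInt f a b.
Proof. intros Hf. apply (@ex_RInt_continuous R_CompleteNormedModule). intros; apply Hf. Qed.

Lemma exdiv_left f x e : cont f -> -1 < x - e -> 0 < e ->
  ex_RInt (fun s => f s / (s - x)) (-1) (x - e).
Proof.
  intros Hf H1 H2. apply (ex_RInt_avoid _ _ _ x). intros z Hz; apply cont_div; auto.
  intros z Hz. rewrite Rmin_left, Rmax_right in Hz by lra. lra.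
Qed.

Lemma exdiv_right f x e : cont f -> x + e < 1 -> 0 < e ->
  ex_RInt (fun s => f s / (s - x)) (x + e) 1.
Proof.
  intros Hf H1 H2. apply (ex_RInt_avoid _ _ _ x). intros z Hz; apply cont_div; auto.
  intros z Hz. rewrite Rmin_left, Rmax_right in Hz by lra. lra.
Qed.

Lemma PV_cont_part h x : cont h ->
  filterlim (fun e => RInt h (-1) (x - e) + RInt h (x + e) 1) (at_right 0)
    (locally (RInt h (-1) 1)).
Proof.
  intros Hh.
  set (phi := fun e => RInt h (-1) (x - e) + RInt h (x + e) 1).
  replace (RInt h (-1) 1) with (phi 0).
  2:{ unfold phi. rewrite Rminus_0_r, Rplus_0_r.
      rewrite <- (RInt_Chasles h (-1) x 1) by (apply cont_ex_RInt; auto). reflexivity. }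
  apply cont_at_right. unfold phi.
  apply (continuous_plus (fun e => RInt h (-1) (x - e)) (fun e => RInt h (x + e) 1)).
  - apply continuous_comp with (f := fun e => x - e) (g := fun t => RInt h (-1) t).
    + apply (@ex_derive_continuous R_AbsRing R_NormedModule); auto_derive; auto.
    + apply (continuous_RInt_1 h (-1) (x - 0)). apply filter_forall. intros z.
      apply (@RInt_correct R_CompleteNormedModule). apply cont_ex_RInt; auto.
  - apply continuous_ext with (f := fun e => - RInt h 1 (x + e)).
    { intros e. rewrite <- (opp_RInt_swap h 1 (x + e)). reflexivity. apply cont_ex_RInt; auto. }
    apply (continuous_opp (fun e => RInt h 1 (x + e))).
    apply continuous_comp with (f := fun e => x + e) (g := fun t => RInt h 1 t).
    + apply (@ex_derive_continuous R_AbsRing R_NormedModule); auto_derive; auto.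
    + apply (continuous_RInt_1 h 1 (x + 0)). apply filter_forall. intros z.
      apply (@RInt_correct R_CompleteNormedModule). apply cont_ex_RInt; auto.
Qed.

Lemma RInt_lin2 (u v : R -> R) a b al be :
  ex_RInt u a b -> ex_RInt v a b ->
  RInt (fun s => al * u s + be * v s) a b = al * RInt u a b + be * RInt v a b.
Proof.
  intros Hu Hv. apply is_RInt_unique.
  apply (@is_RInt_plus R_NormedModule (fun s => al * u s) (fun s => be * v s));
  apply (@is_RInt_scal R_NormedModule); apply (@RInt_correct R_CompleteNormedModule); auto.
Qed.

Lemma small_d x : -1 < x < 1 -> 0 < Rmin (1 - x) (1 + x).
Proof. intros; apply Rmin_glb_lt; lra. Qed.

Lemma small_bounds x e : 0 < e < Rmin (1 - x) (1 + x) -> -1 < x - e /\ x + e < 1.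
Proof.
  intros He. assert (Rmin (1 - x) (1 + x) <= 1 - x) by apply Rmin_l.
  assert (Rmin (1 - x) (1 + x) <= 1 + x) by apply Rmin_r. lra.
Qed.

Lemma lin_div_eq (a b c d e : R) : (a * b + c * d) / e = a * (b / e) + c * (d / e).
Proof. unfold Rdiv; ring. Qed.

Lemma mulx_div_eq (s fs x : R) : s - x <> 0 -> s * fs / (s - x) = 1 * fs + x * (fs / (s - x)).
Proof. intros; field; auto. Qed.

Lemma PV_ext f g x l : -1 < x < 1 -> (forall s, -1 < s < 1 -> f s = g s) ->
  is_PV f x l -> is_PV g x l.
Proof.
  intros Hx Hfg H. unfold is_PV in *.
  eapply filterlim_ext_loc; [|exact H].
  eapply filter_imp; [|apply (at_right_small _ (small_d x Hx))].
  intros e He. pose proof (small_bounds x e He) as [H1 H2].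
  apply f_equal2; apply RInt_ext; intros s Hs;
  [rewrite Rmin_left, Rmax_right in Hs by lra | rewrite Rmin_left, Rmax_right in Hs by lra];
  rewrite Hfg by (split; lra); reflexivity.
Qed.

Lemma PV_lin f g x a b al be : -1 < x < 1 -> cont f -> cont g ->
  is_PV f x a -> is_PV g x b -> is_PV (fun s => al * f s + be * g s) x (al * a + be * b).
Proof.
  intros Hx Hf Hg Ha Hb. unfold is_PV in *.
  eapply filterlim_ext_loc.
  2:{ replace (al * a + be * b) with (al * a + be * b) by reflexivity.
      apply lim_plus; apply lim_scal; [exact Ha | exact Hb]. }
  eapply filter_imp; [|apply (at_right_small _ (small_d x Hx))].
  intros e He. pose proof (small_bounds x e He) as [H1 H2].
  rewrite (RInt_ext (fun s => (al * f s + be * g s) / (s - x))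
             (fun s => al * (f s / (s - x)) + be * (g s / (s - x)))) by (intros; apply lin_div_eq).
  rewrite (RInt_ext (fun s => (al * f s + be * g s) / (s - x))
             (fun s => al * (f s / (s - x)) + be * (g s / (s - x))) (x + e)) by (intros; apply lin_div_eq).
  rewrite !RInt_lin2; try (apply exdiv_left; auto; lra); try (apply exdiv_right; auto; lra).
  ring.
Qed.

Lemma PV_mulx f x a : -1 < x < 1 -> cont f -> is_PV f x a ->
  is_PV (fun s => s * f s) x (RInt f (-1) 1 + x * a).
Proof.
  intros Hx Hf Ha. unfold is_PV in *.
  eapply filterlim_ext_loc.
  2:{ apply lim_plus; [apply (PV_cont_part f x Hf) | apply lim_scal; exact Ha]. }
  eapply filter_imp; [|apply (at_right_small _ (small_d x Hx))].
  intros e He. pose proof (small_bounds x e He) as [H1 H2].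
  assert (E1 : RInt (fun s => s * f s / (s - x)) (-1) (x - e) = RInt (fun s => 1 * f s + x * (f s / (s - x))) (-1) (x - e)).
  { apply RInt_ext. intros s Hs. rewrite Rmin_left, Rmax_right in Hs by lra. apply mulx_div_eq. lra. }
  assert (E2 : RInt (fun s => s * f s / (s - x)) (x + e) 1 = RInt (fun s => 1 * f s + x * (f s / (s - x))) (x + e) 1).
  { apply RInt_ext. intros s Hs. rewrite Rmin_left, Rmax_right in Hs by lra. apply mulx_div_eq. lra. }
  rewrite E1, E2.
  rewrite (RInt_lin2 f (fun s => f s / (s - x)) (-1) (x - e) 1 x), (RInt_lin2 f (fun s => f s / (s - x)) (x + e) 1 1 x);
   [ ring | apply cont_ex_RInt; exact Hf | apply exdiv_right; [exact Hf|lra|lra]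
   | apply cont_ex_RInt; exact Hf | apply exdiv_left; [exact Hf|lra|lra]].
Qed.

Definition g (K : nat) (s : R) := sin (INR K * acos s).

Lemma sin_nPI n : sin (INR n * PI) = 0.
Proof. apply sin_eq_0_1. exists (Z.of_nat n). rewrite INR_IZR_INZ. reflexivity. Qed.

Lemma cont_g K : cont (g K).
Proof.
  intros s. unfold g. apply continuous_sin_comp.
  apply (continuous_mult (fun _ => INR K) acos). apply continuous_const. apply acos_cont.
Qed.

Lemma sin_acos_pos t : -1 < t < 1 -> 0 < sin (acos t).
Proof. intros H. pose proof (acos_bound_lt t H). apply sin_gt_0; lra. Qed.

Lemma d_acos t : -1 < t < 1 -> is_derive acos t (-1 / sin (acos t)).
Proof.
  intros [h2 h1]. apply is_derive_Reals.
  rewrite sin_acos by lra.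
  pose proof (derive_pt_acos t (conj h2 h1)) as H.
  rewrite <- H. destruct (derivable_pt_acos t (conj h2 h1)) as [l Hl]. exact Hl.
Qed.

Lemma d_sinc c t : -1 < t < 1 ->
  is_derive (fun s => sin (c * acos s)) t (- c * cos (c * acos t) / sin (acos t)).
Proof.
  intros Ht. pose proof (sin_acos_pos t Ht).
  eapply is_derive_ext. intros s; reflexivity.
  replace (- c * cos (c * acos t) / sin (acos t)) with (scal (c * (-1 / sin (acos t))) (cos (c * acos t))).
  2:{ unfold scal; simpl; unfold mult; simpl. field. lra. }
  apply (is_derive_comp sin (fun s => c * acos s)). apply is_derive_sin.
  apply (is_derive_scal acos t c). apply d_acos, Ht.
Qed.

Lemma d_cosc c t : -1 < t < 1 ->
  is_derive (fun s => cos (c * acos s)) t (c * sin (c * acos t) / sin (acos t)).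
Proof.
  intros Ht. pose proof (sin_acos_pos t Ht).
  replace (c * sin (c * acos t) / sin (acos t)) with (scal (c * (-1 / sin (acos t))) (- sin (c * acos t))).
  2:{ unfold scal; simpl; unfold mult; simpl. field. lra. }
  apply (is_derive_comp cos (fun s => c * acos s)). apply is_derive_cos.
  apply (is_derive_scal acos t c). apply d_acos, Ht.
Qed.

Lemma is_derive_eq (f : R -> R) t l l' : is_derive f t l -> l = l' -> is_derive f t l'.
Proof. intros H ->; exact H. Qed.

Lemma cont_sinc c : cont (fun s => sin (c * acos s)).
Proof.
  intros s. apply continuous_sin_comp.
  apply (continuous_mult (fun _ => c) acos). apply continuous_const. apply acos_cont.
Qed.

Lemma cont_lin2 (u v : R -> R) a b : cont u -> cont v -> cont (fun s => a * u s - b * v s).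
Proof.
  intros Hu Hv s. apply (continuous_minus (fun s => a * u s) (fun s => b * v s)).
  - apply (continuous_mult (fun _ => a) u). apply continuous_const. apply Hu.
  - apply (continuous_mult (fun _ => b) v). apply continuous_const. apply Hv.
Qed.

Lemma is_derive_lin2 (u v : R -> R) t du dv a b :
  is_derive u t du -> is_derive v t dv ->
  is_derive (fun s => a * u s - b * v s) t (a * du - b * dv).
Proof.
  intros Hu Hv.
  apply (is_derive_minus (fun s => a * u s) (fun s => b * v s)).
  - apply (is_derive_scal u t a). exact Hu.
  - apply (is_derive_scal v t b). exact Hv.
Qed.

Lemma acos_m1 : acos (-1) = PI.
Proof. unfold acos. destruct (Rle_dec (-1) (-1)); [reflexivity | lra]. Qed.

Lemma I1 : RInt (g 1) (-1) 1 = PI / 2.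
Proof.
  apply is_RInt_unique.
  set (F := fun s => (1/4) * sin (2 * acos s) - (1/2) * acos s).
  replace (PI / 2) with (F 1 - F (-1)).
  2:{ unfold F. rewrite acos_1, acos_m1. rewrite Rmult_0_r, sin_0, sin_2PI. lra. }
  apply (FTC_open F (g 1) (-1) 1 2); try lra.
  - intros z _. apply cont_g.
  - intros t Ht. pose proof (sin_acos_pos t Ht).
    eapply is_derive_eq. apply is_derive_lin2. apply (d_sinc 2 t Ht). apply (d_acos t Ht).
    match goal with |- ?a = ?b => change (@eq R a b) end.
    unfold g. simpl (INR 1). rewrite Rmult_1_l. rewrite cos_2a_sin. field. lra.
  - exact (cont_lin2 _ _ _ _ (cont_sinc 2) acos_cont (-1)).
  - exact (cont_lin2 _ _ _ _ (cont_sinc 2) acos_cont 1).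
Qed.

Lemma IK2 K : RInt (g (S (S K))) (-1) 1 = 0.
Proof.
  apply is_RInt_unique.
  set (c := INR (S (S K))).
  assert (Hc1 : INR (S (S (S K))) = c + 1) by (unfold c; rewrite (S_INR (S (S K))); ring).
  assert (Hc2 : INR (S K) = c - 1) by (unfold c; rewrite (S_INR (S K)); ring).
  assert (Hpos : 0 < c - 1) by (rewrite <- Hc2; apply lt_0_INR; lia).
  set (F := fun s => (1/(2*(c+1))) * sin ((c+1) * acos s) - (1/(2*(c-1))) * sin ((c-1) * acos s)).
  replace 0 with (F 1 - F (-1)).
  2:{ unfold F. rewrite acos_1, acos_m1. rewrite !Rmult_0_r, sin_0.
      rewrite <- Hc1, <- Hc2, !sin_nPI. lra. }
  apply (FTC_open F (g (S (S K))) (-1) 1 2); try lra.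
  - intros z _. apply cont_g.
  - intros t Ht. pose proof (sin_acos_pos t Ht).
    eapply is_derive_eq. apply is_derive_lin2. apply (d_sinc (c+1) t Ht). apply (d_sinc (c-1) t Ht).
    match goal with |- ?a = ?b => change (@eq R a b) end.
    unfold g. fold c.
    replace ((c + 1) * acos t) with (c * acos t + acos t) by ring.
    replace ((c - 1) * acos t) with (c * acos t - acos t) by ring.
    rewrite cos_plus, cos_minus. field. lra.
  - exact (cont_lin2 _ _ _ _ (cont_sinc _) (cont_sinc _) (-1)).
  - exact (cont_lin2 _ _ _ _ (cont_sinc _) (cont_sinc _) 1).
Qed.

Lemma alg_J1 t x w c : 0 < w -> w * w = 1 - t ^ 2 -> c * c = 1 - x ^ 2 ->
  0 < 1 - x * t + c * w -> t - x <> 0 ->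
  - t / w + x * (-1 / w) - c * ((- x - c * t / w) / (1 - x * t + c * w)) + c * (1 / (t - x))
  = w / (t - x).
Proof.
  intros Hw Hww Hcc HN Htx.
  set (N := 1 - x * t + c * w) in *.
  set (T := -(t + x) * N * (t - x) + c * (x * w + c * t) * (t - x) + c * w * N).
  assert (E : T - w * w * N = (w * w - (1 - t ^ 2)) * (c * c - 1 + x * t - c * w)
                              + (c * c - (1 - x ^ 2)) * (1 - t * x)).
  { unfold T, N. ring. }
  assert (ET0 : T - w * w * N = 0) by (rewrite E, Hww, Hcc; ring).
  assert (ET : T = w * w * N) by lra.
  transitivity (T / (w * N * (t - x))).
  - unfold T. field. repeat split; lra.
  - rewrite ET. field. repeat split; lra.
Qed.

Section J1.
Variable x : R.
Hypothesis Hx : -1 < x < 1.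

Let c := sqrt (1 - x ^ 2).
Let N s := 1 - x * s + c * sqrt (1 - s ^ 2).
Let Q s := sqrt (1 - s ^ 2) + x * acos s - c * ln (N s).

Lemma c_sq : c * c = 1 - x ^ 2.
Proof. unfold c. apply sqrt_sqrt. nra. Qed.

Lemma N_pos s : -1 <= s <= 1 -> 0 < N s.
Proof.
  intros Hs. unfold N. assert (0 <= c * sqrt (1 - s ^ 2)).
  { apply Rmult_le_pos; apply sqrt_pos. }
  assert (x * s < 1).
  { assert (0 <= (1 - x) * (1 + s)) by (apply Rmult_le_pos; lra).
    destruct (Rlt_le_dec s 1).
    - assert (0 < (1 + x) * (1 - s)) by (apply Rmult_lt_0_compat; lra). nra.
    - assert (s = 1) by lra. subst. lra. }
  lra.
Qed.

Lemma cont_sqrt1 s : continuous (fun s => sqrt (1 - s ^ 2)) s.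
Proof.
  apply continuous_sqrt_comp.
  apply (@ex_derive_continuous R_AbsRing R_NormedModule); auto_derive; auto.
Qed.

Lemma N_cont s : continuous N s.
Proof.
  unfold N. apply (continuous_plus (fun s => 1 - x * s) (fun s => c * sqrt (1 - s ^ 2))).
  - apply (@ex_derive_continuous R_AbsRing R_NormedModule); auto_derive; auto.
  - apply (continuous_mult (fun _ => c) (fun s => sqrt (1 - s ^ 2))). apply continuous_const.
    apply cont_sqrt1.
Qed.

Lemma Q_cont s : -1 <= s <= 1 -> continuous Q s.
Proof.
  intros Hs. unfold Q.
  apply (continuous_minus (fun s => sqrt (1 - s ^ 2) + x * acos s) (fun s => c * ln (N s))).
  - apply (continuous_plus (fun s => sqrt (1 - s ^ 2)) (fun s => x * acos s)).
    + apply cont_sqrt1.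
    + apply (continuous_mult (fun _ => x) acos). apply continuous_const. apply acos_cont.
  - apply (continuous_mult (fun _ => c) (fun s => ln (N s))). apply continuous_const.
    apply (continuous_comp N ln). apply N_cont. apply continuous_ln. apply N_pos, Hs.
Qed.

Lemma Q_der t : -1 < t < 1 ->
  is_derive Q t (- t / sqrt (1 - t ^ 2) + x * (-1 / sqrt (1 - t ^ 2))
     - c * ((- x - c * t / sqrt (1 - t ^ 2)) / N t)).
Proof.
  intros Ht. 
  assert (Hw : 0 < 1 - t ^ 2) by nra.
  pose proof (sqrt_lt_R0 _ Hw) as Hsw.
  assert (HN : 0 < N t) by (apply N_pos; lra).
  assert (Hacos : is_derive acos t (-1 / sqrt (1 - t ^ 2))).
  { eapply is_derive_eq. apply d_acos, Ht. rewrite sin_acos by lra. unfold Rsqr. f_equal. f_equal. ring. }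
  unfold Q.
  apply (is_derive_minus (fun s => sqrt (1 - s ^ 2) + x * acos s) (fun s => c * ln (N s))).
  - apply (is_derive_plus (fun s => sqrt (1 - s ^ 2)) (fun s => x * acos s)).
    + auto_derive. lra. replace (1 + - (t * (t * 1))) with (1 - t ^ 2) by ring. field. lra.
    + apply (is_derive_scal acos t x). exact Hacos.
  - unfold N. unfold N in HN. auto_derive.
    + split; [lra|]. split; [exact HN|]. auto.
    + replace (1 + - (t * (t * 1))) with (1 - t ^ 2) by ring.
      replace (1 + - (x * t)) with (1 - x * t) by ring. field. split; lra.
Qed.

Lemma HFL t : -1 < t < x ->
  is_derive (fun s => Q s + c * ln (x - s)) t (sqrt (1 - t ^ 2) / (t - x)).
Proof.
  intros Ht.
  assert (Hw : 0 < 1 - t ^ 2) by nra.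
  pose proof (sqrt_lt_R0 _ Hw) as Hsw.
  assert (HN : 0 < N t) by (apply N_pos; lra).
  assert (Hl : is_derive (fun s => c * ln (x - s)) t (c * (1 / (t - x)))).
  { auto_derive. lra. field. lra. }
  eapply is_derive_eq. apply (is_derive_plus Q (fun s => c * ln (x - s))). apply Q_der; lra. exact Hl.
  change (- t / sqrt (1 - t ^ 2) + x * (-1 / sqrt (1 - t ^ 2))
     - c * ((- x - c * t / sqrt (1 - t ^ 2)) / N t) + c * (1 / (t - x)) = sqrt (1 - t ^ 2) / (t - x)).
  unfold N in *. apply alg_J1; auto. apply sqrt_sqrt; lra. apply c_sq. lra.
Qed.

Lemma HFR t : x < t < 1 ->
  is_derive (fun s => Q s + c * ln (s - x)) t (sqrt (1 - t ^ 2) / (t - x)).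
Proof.
  intros Ht.
  assert (Hw : 0 < 1 - t ^ 2) by nra.
  pose proof (sqrt_lt_R0 _ Hw) as Hsw.
  assert (HN : 0 < N t) by (apply N_pos; lra).
  assert (Hl : is_derive (fun s => c * ln (s - x)) t (c * (1 / (t - x)))).
  { auto_derive. lra. field. lra. }
  eapply is_derive_eq. apply (is_derive_plus Q (fun s => c * ln (s - x))). apply Q_der; lra. exact Hl.
  change (- t / sqrt (1 - t ^ 2) + x * (-1 / sqrt (1 - t ^ 2))
     - c * ((- x - c * t / sqrt (1 - t ^ 2)) / N t) + c * (1 / (t - x)) = sqrt (1 - t ^ 2) / (t - x)).
  unfold N in *. apply alg_J1; auto. apply sqrt_sqrt; lra. apply c_sq. lra.
Qed.

Lemma cont_lnc a b s : 0 < a * s + b -> continuous (fun s => ln (a * s + b)) s.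
Proof.
  intros H. apply (continuous_comp (fun s => a * s + b) ln).
  apply (@ex_derive_continuous R_AbsRing R_NormedModule); auto_derive; auto.
  apply continuous_ln. exact H.
Qed.

Lemma J1_sqrt : is_PV (fun s => sqrt (1 - s ^ 2)) x (- PI * x).
Proof.
  assert (Hf : cont (fun s => sqrt (1 - s ^ 2))) by (intros s; apply cont_sqrt1).
  assert (Hc0 : continuous (fun e => Q (x - e) - Q (x + e) + - PI * x) 0).
  { apply (continuous_plus (fun e => Q (x - e) - Q (x + e)) (fun _ => - PI * x)).
    - apply (continuous_minus (fun e => Q (x - e)) (fun e => Q (x + e))).
      + apply (continuous_comp (fun e => x - e) Q).
        * apply (@ex_derive_continuous R_AbsRing R_NormedModule); auto_derive; auto.
        * apply Q_cont. lra.
      + apply (continuous_comp (fun e => x + e) Q).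
        * apply (@ex_derive_continuous R_AbsRing R_NormedModule); auto_derive; auto.
        * apply Q_cont. lra.
    - apply continuous_const. }
  pose proof (cont_at_right _ Hc0) as Hl. simpl in Hl.
  rewrite Rminus_0_r, Rplus_0_r in Hl.
  replace (Q x - Q x + - PI * x) with (- PI * x) in Hl by ring.
  unfold is_PV. eapply filterlim_ext_loc; [|exact Hl].
  eapply filter_imp; [|apply (at_right_small _ (small_d x Hx))].
  intros e He. pose proof (small_bounds x e He) as [H1 H2].
  assert (IL : RInt (fun s => sqrt (1 - s ^ 2) / (s - x)) (-1) (x - e)
              = (Q (x - e) + c * ln (x - (x - e))) - (Q (-1) + c * ln (x - -1))).
  { apply is_RInt_unique.
    apply (FTC_open (fun s => Q s + c * ln (x - s)) _ (-1) (x - e) x); try lra.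
    - intros z Hz. apply cont_div; auto.
    - intros t Ht. apply HFL. lra.
    - apply (continuous_plus Q (fun s => c * ln (x - s))). apply Q_cont; lra.
      apply (continuous_mult (fun _ => c) (fun s => ln (x - s))). apply continuous_const.
      apply continuous_ext with (fun s => ln (-1 * s + x)). intros; f_equal; ring.
      apply cont_lnc. lra.
    - apply (continuous_plus Q (fun s => c * ln (x - s))). apply Q_cont; lra.
      apply (continuous_mult (fun _ => c) (fun s => ln (x - s))). apply continuous_const.
      apply continuous_ext with (fun s => ln (-1 * s + x)). intros; f_equal; ring.
      apply cont_lnc. lra. }
  assert (IR : RInt (fun s => sqrt (1 - s ^ 2) / (s - x)) (x + e) 1
              = (Q 1 + c * ln (1 - x)) - (Q (x + e) + c * ln ((x + e) - x))).
  { apply is_RInt_unique.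
    apply (FTC_open (fun s => Q s + c * ln (s - x)) _ (x + e) 1 x); try lra.
    - intros z Hz. apply cont_div; auto.
    - intros t Ht. apply HFR. lra.
    - apply (continuous_plus Q (fun s => c * ln (s - x))). apply Q_cont; lra.
      apply (continuous_mult (fun _ => c) (fun s => ln (s - x))). apply continuous_const.
      apply continuous_ext with (fun s => ln (1 * s + - x)). intros; f_equal; ring.
      apply cont_lnc. lra.
    - apply (continuous_plus Q (fun s => c * ln (s - x))). apply Q_cont; lra.
      apply (continuous_mult (fun _ => c) (fun s => ln (s - x))). apply continuous_const.
      apply continuous_ext with (fun s => ln (1 * s + - x)). intros; f_equal; ring.
      apply cont_lnc. lra. }
  rewrite IL, IR.
  replace (x - (x - e)) with e by ring. replace (x + e - x) with e by ring.
  assert (Q1 : Q 1 = - c * ln (1 - x)).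
  { unfold Q, N. rewrite acos_1. replace (1 - 1 ^ 2) with 0 by ring. rewrite sqrt_0.
    replace (1 - x * 1 + c * 0) with (1 - x) by ring. ring. }
  assert (Qm1 : Q (-1) = x * PI - c * ln (x - -1)).
  { unfold Q, N. rewrite acos_m1. replace (1 - (-1) ^ 2) with 0 by ring. rewrite sqrt_0.
    replace (1 - x * -1 + c * 0) with (x - -1) by ring. ring. }
  rewrite Q1, Qm1. ring.
Qed.

End J1.

Lemma PV_val f x l l' : is_PV f x l -> l = l' -> is_PV f x l'.
Proof. intros H ->; exact H. Qed.

Lemma PV_g0 x : is_PV (g 0) x 0.
Proof.
  unfold is_PV. apply filterlim_ext with (fun _ => 0).
  - intros e.
    assert (Z : forall a b, RInt (fun s => g 0 s / (s - x)) a b = 0).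
    { intros a b. rewrite (RInt_ext _ (fun _ => 0)).
      - rewrite RInt_const. unfold scal; simpl; unfold mult; simpl. ring.
      - intros s _. unfold g. simpl (INR 0). rewrite Rmult_0_l, sin_0. unfold Rdiv. apply Rmult_0_l. }
    rewrite !Z. ring.
  - apply filterlim_const.
Qed.

Lemma g_J1 x : -1 < x < 1 -> is_PV (g 1) x (- PI * cos (INR 1 * acos x)).
Proof.
  intros Hx. simpl (INR 1). rewrite Rmult_1_l, cos_acos by lra.
  apply (PV_ext (fun s => sqrt (1 - s ^ 2))). exact Hx.
  - intros s Hs. unfold g. simpl (INR 1). rewrite Rmult_1_l, sin_acos by lra.
    unfold Rsqr. f_equal. ring.
  - apply J1_sqrt. exact Hx.
Qed.

Lemma cont_mulx f : cont f -> cont (fun s => s * f s).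
Proof.
  intros Hf s. apply (continuous_mult (fun s => s) f).
  apply (@ex_derive_continuous R_AbsRing R_NormedModule); auto_derive; auto. apply Hf.
Qed.

Lemma PV_rec K x a b : -1 < x < 1 -> is_PV (g K) x a -> is_PV (g (S K)) x b ->
  is_PV (g (S (S K))) x (2 * (RInt (g (S K)) (-1) 1 + x * b) + (-1) * a).
Proof.
  intros Hx Ha Hb.
  apply (PV_ext (fun s => 2 * (s * g (S K) s) + (-1) * g K s)). exact Hx.
  - intros s Hs. unfold g.
    set (t := acos s).
    replace (INR (S (S K)) * t) with (INR (S K) * t + t) by (rewrite (S_INR (S K)); ring).
    replace (INR K * t) with (INR (S K) * t - t) by (rewrite (S_INR K); ring).
    rewrite sin_plus, sin_minus. unfold t. rewrite cos_acos by lra. ring.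
  - apply PV_lin; auto. apply cont_mulx, cont_g. apply cont_g.
    apply PV_mulx; auto. apply cont_g.
Qed.

Lemma JK x : -1 < x < 1 -> forall K,
  is_PV (g (S K)) x (- PI * cos (INR (S K) * acos x)) /\
  is_PV (g (S (S K))) x (- PI * cos (INR (S (S K)) * acos x)).
Proof.
  intros Hx K. induction K as [|K [IH1 IH2]].
  - split. apply g_J1, Hx.
    eapply PV_val. apply (PV_rec 0 x 0 _ Hx (PV_g0 x) (g_J1 x Hx)).
    rewrite I1. simpl (INR 1). simpl (INR 2).
    replace (INR 2) with 2 by (simpl; ring).
    rewrite cos_2a_cos, Rmult_1_l, cos_acos by lra. match goal with |- ?a = ?b => change (@eq R a b) end; field.
  - split. exact IH2.
    eapply PV_val. apply (PV_rec (S K) x _ _ Hx IH1 IH2).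
    rewrite IK2.
    set (t := acos x).
    replace (INR (S (S (S K))) * t) with (INR (S (S K)) * t + t) by (rewrite (S_INR (S (S K))); ring).
    replace (INR (S K) * t) with (INR (S (S K)) * t - t) by (rewrite (S_INR (S K)); ring).
    rewrite cos_plus, cos_minus. unfold t. rewrite cos_acos by lra. ring.
Qed.

Definition Cb (n k : nat) : R := if (k <=? n)%nat then Binomial.C n k else 0.

Lemma C_nn n : Binomial.C n n = 1.
Proof. unfold Binomial.C. rewrite Nat.sub_diag. simpl (Factorial.fact 0). simpl (INR 1). field. apply INR_fact_neq_0. Qed.

Lemma C_n0 n : Binomial.C n 0 = 1.
Proof. unfold Binomial.C. rewrite Nat.sub_0_r. simpl (Factorial.fact 0). simpl (INR 1). field. apply INR_fact_neq_0. Qed.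

Lemma Cb_S0 n : Cb (S n) 0 = Cb n 0.
Proof. unfold Cb. simpl. rewrite !C_n0. reflexivity. Qed.

Lemma Cb_pascal n i : Cb (S n) (S i) = Cb n i + Cb n (S i).
Proof.
  unfold Cb. destruct (Nat.ltb_spec i n) as [h|h].
  - rewrite (proj2 (Nat.leb_le (S i) (S n))) by lia.
    rewrite (proj2 (Nat.leb_le i n)) by lia.
    rewrite (proj2 (Nat.leb_le (S i) n)) by lia.
    symmetry. apply pascal. exact h.
  - destruct (Nat.eq_dec i n) as [->|hn].
    + rewrite !Nat.leb_refl.
      rewrite (proj2 (Nat.leb_gt (S n) n)) by lia. rewrite !C_nn. ring.
    + rewrite (proj2 (Nat.leb_gt (S i) (S n))) by lia.
      rewrite (proj2 (Nat.leb_gt i n)) by lia.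
      rewrite (proj2 (Nat.leb_gt (S i) n)) by lia. ring.
Qed.

Lemma Cb_big n : Cb n (S n) = 0.
Proof. unfold Cb. rewrite (proj2 (Nat.leb_gt (S n) n)) by lia. reflexivity. Qed.

Lemma pascal_sum (u : nat -> R) N :
  sum_f_R0 (fun i => Cb (S N) i * u i) (S N) =
  sum_f_R0 (fun i => Cb N i * (u i + u (S i))) N.
Proof.
  rewrite (decomp_sum _ (S N)) by lia. simpl Nat.pred.
  rewrite (sum_eq (fun i => Cb (S N) (S i) * u (S i))
                  (fun i => Cb N i * u (S i) + Cb N (S i) * u (S i)))
    by (intros; rewrite Cb_pascal; ring).
  rewrite plus_sum.
  rewrite (sum_eq (fun i => Cb N i * (u i + u (S i)))
                  (fun i => Cb N i * u i + Cb N i * u (S i))) by (intros; ring).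
  rewrite plus_sum.
  rewrite Cb_S0.
  destruct N as [|N].
  - simpl. rewrite Cb_big. ring.
  - rewrite (decomp_sum (fun i => Cb (S N) i * u i) (S N)) by lia. simpl Nat.pred.
    rewrite (tech5 (fun i => Cb (S N) (S i) * u (S i)) N). rewrite Cb_big. ring.
Qed.

Lemma pascal_sum2 (u : nat -> R) N :
  sum_f_R0 (fun i => Cb (S (S N)) i * u i) (S (S N)) =
  sum_f_R0 (fun i => Cb N i * (u i + 2 * u (S i) + u (S (S i)))) N.
Proof.
  rewrite pascal_sum. rewrite pascal_sum. apply sum_eq. intros; ring.
Qed.

Lemma trig_exp M a t :
  sin (a * t) * (sin t) ^ (2 * M) =
  (-1/4) ^ M * sum_f_R0 (fun j => (-1) ^ j * Cb (2 * M) j * sin ((a - 2 * INR M + 2 * INR j) * t)) (2 * M).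
Proof.
  induction M as [|M IH].
  - simpl. unfold Cb. simpl. rewrite C_n0. replace ((a - 2 * 0 + 2 * 0) * t) with (a * t) by ring. ring.
  - replace (2 * S M)%nat with (S (S (2 * M))) by lia.
    replace (sin (a * t) * sin t ^ S (S (2 * M))) with ((sin (a * t) * sin t ^ (2 * M)) * (sin t * sin t)) by (simpl; ring).
    rewrite IH. clear IH.
    rewrite (sum_eq (fun j => (-1) ^ j * Cb (S (S (2 * M))) j * sin ((a - 2 * INR (S M) + 2 * INR j) * t)) (fun i => Cb (S (S (2 * M))) i * ((-1) ^ i * sin ((a - 2 * INR (S M) + 2 * INR i) * t))))
      by (intros; ring).
    rewrite pascal_sum2.
    rewrite Rmult_assoc, scal_sum.
    replace ((-1/4) ^ S M) with ((-1/4) ^ M * (-1/4)) by (simpl; ring).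
    rewrite (Rmult_comm (sum_f_R0 _ _) (sin t * sin t)), <- Rmult_assoc, scal_sum.
    apply sum_eq. intros j _.
    set (B := (a - 2 * INR M + 2 * INR j) * t).
    replace ((a - 2 * INR (S M) + 2 * INR j) * t) with (B - 2 * t) by (unfold B; rewrite S_INR; ring).
    replace ((a - 2 * INR (S M) + 2 * INR (S j)) * t) with B by (unfold B; rewrite !S_INR; ring).
    replace ((a - 2 * INR (S M) + 2 * INR (S (S j))) * t) with (B + 2 * t) by (unfold B; rewrite !S_INR; ring).
    rewrite sin_minus, sin_plus, cos_2a_sin, sin_2a.
    simpl ((-1) ^ S j). simpl ((-1) ^ S (S j)). field.
Qed.

Lemma JK' x K : -1 < x < 1 -> (1 <= K)%nat -> is_PV (g K) x (- PI * cos (INR K * acos x)).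
Proof. intros Hx HK. destruct K as [|K]; [lia|]. apply (JK x Hx K). Qed.

Lemma cont_scal c f : cont f -> cont (fun s => c * f s).
Proof. intros Hf s. apply (continuous_mult (fun _ => c) f). apply continuous_const. apply Hf. Qed.

Lemma cont_sum (F : nat -> R -> R) N : (forall j, cont (F j)) ->
  cont (fun s => sum_f_R0 (fun j => F j s) N).
Proof.
  intros HF. induction N as [|N IH]; intros s.
  - simpl. apply HF.
  - simpl. apply (continuous_plus (fun s => sum_f_R0 (fun j => F j s) N) (F (S N))). apply IH. apply HF.
Qed.

Lemma PV_scal c f x a : -1 < x < 1 -> cont f -> is_PV f x a -> is_PV (fun s => c * f s) x (c * a).
Proof.
  intros Hx Hf Ha. eapply PV_val. eapply PV_ext. exact Hx.
  2:{ apply (PV_lin f f x a a c 0); auto. }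
  intros s _. simpl. ring. simpl. ring.
Qed.

Lemma PV_sum (F : nat -> R -> R) (L : nat -> R) N x : -1 < x < 1 -> (forall j, cont (F j)) ->
  (forall j, (j <= N)%nat -> is_PV (F j) x (L j)) ->
  is_PV (fun s => sum_f_R0 (fun j => F j s) N) x (sum_f_R0 L N).
Proof.
  intros Hx HF. induction N as [|N IH]; intros HL.
  - simpl. apply HL. lia.
  - simpl. eapply PV_val. eapply PV_ext. exact Hx.
    2:{ apply (PV_lin (fun s => sum_f_R0 (fun j => F j s) N) (F (S N)) x (sum_f_R0 L N) (L (S N)) 1 1). exact Hx. apply cont_sum, HF. apply HF.
        apply IH. intros; apply HL; lia. apply HL; lia. }
    intros s _. simpl. ring. simpl. ring.
Qed.

Lemma is_derive_sum (F : nat -> R -> R) (dF : nat -> R) N r :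
  (forall j, is_derive (F j) r (dF j)) ->
  is_derive (fun x => sum_f_R0 (fun j => F j x) N) r (sum_f_R0 dF N).
Proof.
  intros HF. induction N as [|N IH].
  - simpl. apply HF.
  - simpl. apply (is_derive_plus (fun x => sum_f_R0 (fun j => F j x) N) (F (S N))). apply IH. apply HF.
Qed.

Theorem mainTheorem4 (m n : nat) (hm : (2 <= m)%nat) (hn : (2 * m - 1 <= n)%nat)
  (r : R) (hr : Rabs r < 1) :
  is_HFP2 (fun s => chebU n s * ((1 - s ^ 2) ^ (m - 1)%nat * sqrt (1 - s ^ 2))) r
    (PI * (-1) ^ m * (1 / 2) ^ (2 * m - 2)%nat *
     sum_f_R0 (fun j => (-1) ^ j * Binomial.C (2 * m - 2)%nat j
                        * INR (n + 3 - 2 * m + 2 * j)%nat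
                        * chebU (n + 2 - 2 * m + 2 * j)%nat r) (2 * m - 2)%nat).
Proof.
  destruct m as [|M]; [lia|].
  replace (S M - 1)%nat with M by lia.
  replace (2 * S M - 2)%nat with (2 * M)%nat by lia.
  set (k0 := (n + 3 - 2 * S M)%nat).
  assert (Hk0 : (k0 + 2 * M = n + 1)%nat) by (unfold k0; lia).
  assert (Hk02 : (2 <= k0)%nat) by (unfold k0; lia).
  set (coef := fun j => (-1/4) ^ M * ((-1) ^ j * Cb (2 * M) j)).
  exists (fun x => sum_f_R0 (fun j => coef j * (- PI * cos (INR (k0 + 2 * j) * acos x))) (2 * M)).
  split.
  - intros x Hx.
    apply (PV_ext (fun s => sum_f_R0 (fun j => coef j * g (k0 + 2 * j) s) (2 * M))). exact Hx.
    + intros s Hs. set (t := acos s).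
      assert (Hsin : 0 < sin t) by (apply sin_acos_pos; lra).
      assert (Hsq : sqrt (1 - s ^ 2) = sin t).
      { unfold t. rewrite sin_acos by lra. unfold Rsqr. f_equal. ring. }
      assert (Hst : 1 - s ^ 2 = sin t ^ 2).
      { rewrite <- Hsq. rewrite pow2_sqrt; [ring|nra]. }
      unfold chebU. fold t. rewrite Hsq, Hst, <- pow_mult.
      replace (sin (INR (n + 1) * t) / sin t * (sin t ^ (2 * M) * sin t))
        with (sin (INR (n + 1) * t) * sin t ^ (2 * M)) by (field; lra).
      rewrite trig_exp. rewrite scal_sum. apply sum_eq. intros j Hj.
      unfold coef, g. fold t.
      assert (E : (k0 + 2 * j + 2 * M = n + 1 + 2 * j)%nat) by lia.
      apply (f_equal INR) in E. rewrite !plus_INR, !mult_INR in E. simpl (INR 2) in E.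
      replace (INR (n + 1) - 2 * INR M + 2 * INR j) with (INR (k0 + 2 * j)).
      ring.
      rewrite !plus_INR, !mult_INR. simpl (INR 2). simpl (INR 1). simpl (INR 1) in E. lra.
    + apply PV_sum. exact Hx.
      * intros j. apply cont_scal, cont_g.
      * intros j Hj. apply PV_scal. exact Hx. apply cont_g. apply JK'. exact Hx. lia.
  - apply Rabs_lt_between in hr.
    set (t := acos r).
    assert (Hsin : 0 < sin t) by (apply sin_acos_pos; lra).
    eapply is_derive_eq.
    apply (is_derive_sum (fun j x => coef j * (- PI * cos (INR (k0 + 2 * j) * acos x)))
             (fun j => coef j * (- PI * (INR (k0 + 2 * j) * sin (INR (k0 + 2 * j) * t) / sin t)))).
    { intros j. apply (is_derive_scal (fun x => - PI * cos (INR (k0 + 2 * j) * acos x))).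
      apply (is_derive_scal (fun x => cos (INR (k0 + 2 * j) * acos x))).
      apply d_cosc. lra. }
    rewrite scal_sum. apply sum_eq. intros j Hj.
    unfold coef, chebU. fold t.
    replace (n + 2 - 2 * S M + 2 * j + 1)%nat with (k0 + 2 * j)%nat by (unfold k0; lia).
    try replace (n + 3 - 2 * S M + 2 * j)%nat with (k0 + 2 * j)%nat by (unfold k0; lia).
    assert (HC : Cb (2 * M)%nat j = Binomial.C (2 * M)%nat j).
    { unfold Cb. rewrite (proj2 (Nat.leb_le j (2 * M))) by lia. reflexivity. }
    rewrite HC.
    replace ((-1/4) ^ M) with ((-1) ^ M * (1/2) ^ (2 * M)%nat).
    2:{ rewrite pow_mult. rewrite <- Rpow_mult_distr. f_equal. field. }
    simpl ((-1) ^ S M). field. lra.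
Qed.
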